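(* The functor $CC:\mathcal{ESP}\to\mathcal{ESP}$ preserves pullbacks.
   Context: $\mathcal{ESP}$ is the category of event structures with polarities (esps) and total maps: an event structure $(E,\le,\mathrm{Con})$ has a partial order with finite down-sets $[e]$ and a consistency relation of finite sets (closed under subsets, containing singletons, closed under adding causes); configurations are finite consistent down-closed sets; a map is a polarity-preserving function sending configurations to configurations and injective on each configuration. $A^\perp$ reverses polarities, $A\parallel B$ is the disjoint union $\{1\}\times A\cup\{2\}\times B$. For an esp $A$, $CC_A$ has the events of $A^\perp\parallel A$ with their polarities; for $c=(i,a)$ let $\bar c=(3-i,a)$; the causal order of $CC_A$ is the transitive closure of $\le_{A^\perp\parallel A}\cup\{(\bar c,c)\mid c\text{ positive in }A^\perp\parallel A\}$, and a finite set is consistent iff its down-closure is consistent in $A^\perp\parallel A$. For a map $f:A\to B$, $CC_f:CC_A\to CC_B$ sends $(i,a)$ to $(i,f(a))$; this defines a functor $CC$. *)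

(* Defs.v *)
From Stdlib Require Import Relations List.
Set Implicit Arguments.

Definition Finite (E : Type) (X : E -> Prop) : Prop :=
  exists s : list E, forall x, X x <-> In x s.

(* Raw data of an event structure with polarities: events, polarity
   (true = positive, false = negative), causal order, consistency. *)
Record pre_esp := PreEsp {
  ev  : Type;
  pol : ev -> bool;
  leq : ev -> ev -> Prop;
  con : (ev -> Prop) -> Prop }.

Record esp_axioms (A : pre_esp) : Prop := {
  le_refl    : forall e, leq A e e;
  le_antisym : forall e e', leq A e e' -> leq A e' e -> e = e';
  le_trans   : forall e e' e'', leq A e e' -> leq A e' e'' -> leq A e e'';
  down_fin   : forall e, Finite (fun e' => leq A e' e);
  con_fin    : forall X, con A X -> Finite X;
  con_empty  : con A (fun _ => False);
  con_single : forall e, con A (fun x => x = e);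
  con_sub    : forall X Y, con A X -> (forall x, Y x -> X x) -> con A Y;
  con_cause  : forall X e e', con A X -> X e -> leq A e' e ->
                 con A (fun x => X x \/ x = e') }.

Record esp := Esp { esp_pre :> pre_esp; esp_ax : esp_axioms esp_pre }.

Definition config (A : pre_esp) (x : ev A -> Prop) : Prop :=
  con A x /\ (forall e e', x e -> leq A e' e -> x e').

Definition image (E F : Type) (f : E -> F) (x : E -> Prop) : F -> Prop :=
  fun b => exists a, x a /\ f a = b.

Definition is_map {A B : pre_esp} (f : ev A -> ev B) : Prop :=
  (forall a, pol B (f a) = pol A a) /\
  (forall x, config A x -> config B (image f x)) /\
  (forall x, config A x -> forall a a', x a -> x a' -> f a = f a' -> a = a').

(* A^perp || A : events inl a = (1,a) (in A^perp), inr a = (2,a) (in A). *)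
Definition dpol (A : pre_esp) (c : ev A + ev A) : bool :=
  match c with inl a => negb (pol A a) | inr a => pol A a end.

Definition dle (A : pre_esp) (c c' : ev A + ev A) : Prop :=
  match c, c' with
  | inl a, inl a' => leq A a a'
  | inr a, inr a' => leq A a a'
  | _, _ => False
  end.

Definition dcon (A : pre_esp) (X : ev A + ev A -> Prop) : Prop :=
  Finite X /\ con A (fun a => X (inl a)) /\ con A (fun a => X (inr a)).

Definition bar (E : Type) (c : E + E) : E + E :=
  match c with inl a => inr a | inr a => inl a end.

Definition cc_step (A : pre_esp) (c c' : ev A + ev A) : Prop :=
  dle A c c' \/ (c = bar c' /\ dpol A c' = true).

Definition cc_le (A : pre_esp) : ev A + ev A -> ev A + ev A -> Prop :=
  clos_trans _ (@cc_step A).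

Definition cc_con (A : pre_esp) (X : ev A + ev A -> Prop) : Prop :=
  Finite X /\ dcon A (fun c => exists c', X c' /\ cc_le A c c').

Definition CC (A : pre_esp) : pre_esp :=
  PreEsp (@dpol A) (@cc_le A) (@cc_con A).

Definition CC_map {A B : pre_esp} (f : ev A -> ev B) (c : ev A + ev A)
  : ev B + ev B :=
  match c with inl a => inl (f a) | inr a => inr (f a) end.

(* Pullback squares in ESP:  P --p1--> A --f--> C,  P --p2--> B --g--> C.
   Test objects Q range over (genuine) event structures with polarities. *)
Definition is_pullback {P A B C : pre_esp}
  (p1 : ev P -> ev A) (p2 : ev P -> ev B)
  (f : ev A -> ev C) (g : ev B -> ev C) : Prop :=
  is_map p1 /\ is_map p2 /\ is_map f /\ is_map g /\
  (forall x, f (p1 x) = g (p2 x)) /\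
  forall (Q : esp) (q1 : ev Q -> ev A) (q2 : ev Q -> ev B),
    @is_map Q A q1 -> @is_map Q B q2 -> (forall x, f (q1 x) = g (q2 x)) ->
    exists h : ev Q -> ev P,
      @is_map Q P h /\ (forall x, p1 (h x) = q1 x) /\ (forall x, p2 (h x) = q2 x) /\
      forall h' : ev Q -> ev P,
        @is_map Q P h' -> (forall x, p1 (h' x) = q1 x) -> (forall x, p2 (h' x) = q2 x) ->
        forall x, h' x = h x.

(* Main.v *)
Require Import Defs.
From Stdlib Require Import Relations List Classical ClassicalEpsilon ProofIrrelevance Bool.
Set Implicit Arguments.

Lemma Finite_ext (E : Type) (P Q : E -> Prop) :
  Finite P -> (forall x, P x <-> Q x) -> Finite Q.
Proof.
  intros [s Hs] H. exists s. intro x. rewrite <- H. apply Hs.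
Qed.

Lemma list_filter_ex (E : Type) (Q : E -> Prop) (s : list E) :
  exists s', forall x, (In x s /\ Q x) <-> In x s'.
Proof.
  induction s as [|a s [s' IH]].
  - exists nil. simpl. tauto.
  - destruct (classic (Q a)) as [Ha|Ha].
    + exists (a :: s'). intro x. simpl. rewrite <- IH. split.
      * intros [[->|Hx] HQ]; tauto.
      * intros [<-|[Hx HQ]]; tauto.
    + exists s'. intro x. simpl. rewrite <- IH. split.
      * intros [[<-|Hx] HQ]; tauto.
      * tauto.
Qed.

Lemma Finite_sub (E : Type) (P Q : E -> Prop) :
  Finite P -> (forall x, Q x -> P x) -> Finite Q.
Proof.
  intros [s Hs] H. destruct (list_filter_ex Q s) as [s' Hs'].
  exists s'. intro x. rewrite <- Hs'. rewrite <- Hs. split.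
  - intro HQ. split; auto.
  - tauto.
Qed.

Lemma Finite_image (E F : Type) (f : E -> F) (P : E -> Prop) :
  Finite P -> Finite (image f P).
Proof.
  intros [s Hs]. exists (map f s). intro y. unfold image. rewrite in_map_iff.
  split.
  - intros [a [Ha <-]]. exists a. split; auto. apply Hs; auto.
  - intros [a [<- Ha]]. exists a. split; auto. apply Hs; auto.
Qed.

Section Gen.
Context {X : esp}.

Lemma con_ext (Y Z : ev X -> Prop) :
  con X Y -> (forall x, Y x <-> Z x) -> con X Z.
Proof.
  intros H HYZ. apply (con_sub (esp_ax X) Y); auto. intros x Hx; apply HYZ; auto.
Qed.

Lemma config_ext (Y Z : ev X -> Prop) :
  config X Y -> (forall x, Y x <-> Z x) -> config X Z.
Proof.
  intros [H1 H2] HYZ. split.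
  - apply con_ext with Y; auto.
  - intros e e' He Hle. apply HYZ. apply H2 with e; auto. apply HYZ; auto.
Qed.

Lemma con_add_list (l : list (ev X)) (Y : ev X -> Prop) :
  con X Y -> (forall z, In z l -> exists y, Y y /\ leq X z y) ->
  con X (fun x => Y x \/ In x l).
Proof.
  induction l as [|a l IH]; intros HY Hl.
  - apply con_ext with Y; auto. simpl. tauto.
  - assert (H1 : con X (fun x => Y x \/ In x l)).
    { apply IH; auto. intros z Hz; apply Hl; simpl; auto. }
    destruct (Hl a (or_introl eq_refl)) as [y [Hy Hay]].
    pose proof (con_cause (esp_ax X) _ y a H1 (or_introl Hy) Hay) as H2.
    apply con_ext with (1 := H2). intro x. simpl. split.
    + intros [[H|H]|H]; auto.
    + intros [H|[H|H]]; auto.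
Qed.

Definition down (Y : ev X -> Prop) : ev X -> Prop :=
  fun x => exists y, Y y /\ leq X x y.

Lemma down_finite (Y : ev X -> Prop) : Finite Y -> Finite (down Y).
Proof.
  intros [ys Hys].
  assert (H : forall ys : list (ev X), exists L, forall x,
             (exists y, In y ys /\ leq X x y) <-> In x L).
  { induction ys0 as [|a ys0 [L IH]].
    - exists nil. simpl. firstorder.
    - destruct (down_fin (esp_ax X) a) as [da Hda].
      exists (da ++ L). intro x. rewrite in_app_iff, <- IH, <- Hda. simpl. split.
      + intros [y [[<-|Hy] Hle]]; eauto.
      + intros [H|[y [Hy Hle]]]; eauto. }
  destruct (H ys) as [L HL]. exists L. intro x. rewrite <- HL. unfold down.
  split; intros [y [Hy Hle]]; exists y; split; auto; apply Hys; auto.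
Qed.

Lemma down_config (Y : ev X -> Prop) : con X Y -> config X (down Y).
Proof.
  intro HY.
  destruct (down_finite (con_fin (esp_ax X) _ HY)) as [L HL].
  split.
  - assert (H : con X (fun x => Y x \/ In x L)).
    { apply con_add_list; auto. intros z Hz. apply HL in Hz. exact Hz. }
    apply (con_sub (esp_ax X) _ _ H). intros x Hx. right. apply HL; auto.
  - intros e e' [y [Hy Hle]] Hle'. exists y. split; auto.
    apply (le_trans (esp_ax X)) with e; auto.
Qed.

Lemma down_incl (Y : ev X -> Prop) x : Y x -> down Y x.
Proof. intro H. exists x. split; auto. apply (le_refl (esp_ax X)). Qed.

Lemma single_config (e : ev X) : config X (fun x => leq X x e).
Proof.
  apply config_ext with (down (fun x => x = e)).
  - apply down_config. apply (con_single (esp_ax X)).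
  - intro x. unfold down. split.
    + intros [y [-> H]]; auto.
    + intro H; exists e; auto.
Qed.

Section Maps.
Variable Y : pre_esp.
Variable f : ev X -> ev Y.
Hypothesis Hf : is_map f.

Lemma map_down e b : leq Y b (f e) -> exists e', leq X e' e /\ f e' = b.
Proof.
  intro Hb. destruct Hf as [_ [Hc _]].
  destruct (Hc _ (single_config e)) as [_ Hd].
  assert (Hi : image f (fun x => leq X x e) (f e)).
  { exists e. split; auto. apply (le_refl (esp_ax X)). }
  destruct (Hd _ _ Hi Hb) as [e' [H1 H2]]. eauto.
Qed.

Lemma map_inj_con (Z : ev X -> Prop) e e' :
  con X Z -> Z e -> Z e' -> f e = f e' -> e = e'.
Proof.
  intros HZ He He' Heq. destruct Hf as [_ [_ Hi]].
  apply (Hi (down Z)); auto using down_config, down_incl.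
Qed.

Lemma map_down_config (Z : ev X -> Prop) :
  con X Z -> config Y (image f (down Z)).
Proof.
  intro HZ. destruct Hf as [_ [Hc _]]. apply Hc. apply down_config; auto.
Qed.
End Maps.
End Gen.

Lemma map_comp (X Y : esp) (Z : esp) (f : ev X -> ev Y) (g : ev Y -> ev Z) :
  is_map f -> is_map g -> is_map (fun x => g (f x)).
Proof.
  intros Hf Hg. pose proof Hf as [Hf1 [Hf2 Hf3]]. pose proof Hg as [Hg1 [Hg2 Hg3]].
  split; [|split].
  - intro a. rewrite Hg1, Hf1; auto.
  - intros x Hx. apply config_ext with (image g (image f x)).
    + apply Hg2, Hf2; auto.
    + intro c. unfold image. split.
      * intros [b [[a [Ha <-]] <-]]. eauto.
      * intros [a [Ha <-]]. exists (f a). split; eauto.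
  - intros x Hx a a' Ha Ha' Heq.
    apply (Hf3 x Hx); auto.
    apply (Hg3 (image f x)); auto.
    + exists a; auto.
    + exists a'; auto.
Qed.
Set Implicit Arguments.

Section Sub.
Variable X : esp.
Variable S : ev X -> Prop.
Variable pl : ev X -> bool.

Definition lift (Y : {x | S x} -> Prop) : ev X -> Prop :=
  fun x => exists H : S x, Y (exist _ x H).

Definition sub_pre : pre_esp :=
  @PreEsp {x | S x} (fun w => pl (proj1_sig w))
         (fun w w' => leq X (proj1_sig w) (proj1_sig w'))
         (fun Y => con X (lift Y)).

Lemma sig_eq (w w' : {x | S x}) : proj1_sig w = proj1_sig w' -> w = w'.
Proof.
  destruct w as [x H], w' as [x' H']. simpl. intros ->.
  f_equal. apply proof_irrelevance.
Qed.

Lemma lift_list (l : list (ev X)) :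
  exists l' : list {x | S x}, forall w, In w l' <-> In (proj1_sig w) l.
Proof.
  induction l as [|a l [l' IH]].
  - exists nil. simpl. tauto.
  - destruct (classic (S a)) as [Ha|Ha].
    + exists (exist _ a Ha :: l'). intro w. simpl. rewrite IH. split.
      * intros [<-|H]; auto.
      * intros [H|H]; auto. left. apply sig_eq. auto.
    + exists l'. intro w. simpl. rewrite IH. split; auto.
      intros [H|H]; auto. exfalso. apply Ha. rewrite H. apply proj2_sig.
Qed.

Lemma lift_iff (Y : {x | S x} -> Prop) w : lift Y (proj1_sig w) <-> Y w.
Proof.
  unfold lift. destruct w as [x Hx]. simpl. split.
  - intros [H HY]. replace Hx with H by apply proof_irrelevance. exact HY.
  - intro HY. exists Hx. exact HY.
Qed.

Lemma sub_axioms : esp_axioms sub_pre.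
Proof.
  pose proof (esp_ax X) as AX.
  constructor; simpl.
  - intro e. apply (le_refl AX).
  - intros e e' H1 H2. apply sig_eq. apply (le_antisym AX); auto.
  - intros e e' e'' H1 H2. apply (le_trans AX) with (proj1_sig e'); auto.
  - intro e. destruct (down_fin AX (proj1_sig e)) as [l Hl].
    destruct (lift_list l) as [l' Hl']. exists l'. intro w. rewrite Hl'. apply Hl.
  - intros Y HY. destruct (con_fin AX _ HY) as [l Hl].
    destruct (lift_list l) as [l' Hl']. exists l'. intro w. rewrite Hl', <- Hl.
    symmetry. apply lift_iff.
  - apply con_ext with (fun _ => False). apply (con_empty AX).
    intro x. unfold lift. split; [tauto|]. intros [_ []].
  - intro e. apply con_ext with (fun x => x = proj1_sig e). apply (con_single AX).
    intro x. unfold lift. split.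
    + intros ->. exists (proj2_sig e). destruct e; auto.
    + intros [H Heq]. rewrite <- Heq. auto.
  - intros Y Z HY HZY. apply (con_sub AX _ _ HY). intros x [H Hx]. exists H; auto.
  - intros Y e e' HY He Hle.
    pose proof (con_cause AX _ (proj1_sig e) (proj1_sig e') HY) as H.
    apply con_ext with (1 := H (proj2 (lift_iff Y e) He) Hle).
    intro x. unfold lift. split.
    + intros [[Hx HYx]| Heq]; [|subst x].
      * exists Hx. auto.
      * exists (proj2_sig e'). right. destruct e'; auto.
    + intros [Hx [HYx|Heq]].
      * left. exists Hx; auto.
      * right. rewrite <- Heq. auto.
Qed.

Definition Sub : esp := Esp sub_axioms.

Lemma sub_config_lift (x : ev Sub -> Prop) : config Sub x -> con X (lift x).
Proof. intros [H _]. exact H. Qed.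
End Sub.

Definition und {E : Type} (c : E + E) : E := match c with inl a => a | inr a => a end.
Definition side {E : Type} (c : E + E) : bool := match c with inl _ => false | inr _ => true end.
Definition tag {E : Type} (s : bool) (a : E) : E + E := if s then inr a else inl a.

Lemma tag_side_und (E : Type) (c : E + E) : tag (side c) (und c) = c.
Proof. destruct c; auto. Qed.
Lemma side_tag (E : Type) s (a : E) : side (tag s a) = s.
Proof. destruct s; auto. Qed.
Lemma und_tag (E : Type) s (a : E) : und (tag s a) = a.
Proof. destruct s; auto. Qed.
Lemma bar_tag (E : Type) s (a : E) : bar (tag s a) = tag (negb s) a.
Proof. destruct s; auto. Qed.
Lemma tag_neq (E : Type) s (c : E + E) : side c <> s -> tag s (und c) = bar c.
Proof. destruct c, s; simpl; intros H; auto; congruence. Qed.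
Lemma bar_bar (E : Type) (c : E + E) : bar (bar c) = c.
Proof. destruct c; auto. Qed.
Lemma side_bar (E : Type) (c : E + E) : side (bar c) = negb (side c).
Proof. destruct c; auto. Qed.
Lemma und_bar (E : Type) (c : E + E) : und (bar c) = und c.
Proof. destruct c; auto. Qed.
Lemma tag_inj (E : Type) s s' (a a' : E) : tag s a = tag s' a' -> s = s' /\ a = a'.
Proof. destruct s, s'; simpl; intro H; inversion H; auto. Qed.

Lemma und_CC (A B : pre_esp) (f : ev A -> ev B) c : und (CC_map f c) = f (und c).
Proof. destruct c; auto. Qed.
Lemma side_CC (A B : pre_esp) (f : ev A -> ev B) c : side (CC_map f c) = side c.
Proof. destruct c; auto. Qed.
Lemma CC_tag (A B : pre_esp) (f : ev A -> ev B) s a : CC_map f (tag s a) = tag s (f a).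
Proof. destruct s; auto. Qed.
Lemma CC_bar (A B : pre_esp) (f : ev A -> ev B) c : CC_map f (bar c) = bar (CC_map f c).
Proof. destruct c; auto. Qed.
Lemma dpol_bar (A : pre_esp) c : dpol A (bar c) = negb (dpol A c).
Proof. destruct c; simpl; auto. rewrite Bool.negb_involutive; auto. Qed.
Lemma dpol_tag (A : pre_esp) s a : dpol A (tag s a) = if s then pol A a else negb (pol A a).
Proof. destruct s; auto. Qed.
Lemma dpol_CC (A B : pre_esp) (f : ev A -> ev B) :
  (forall a, pol B (f a) = pol A a) -> forall c, dpol B (CC_map f c) = dpol A c.
Proof. intros H c. destruct c; simpl; rewrite H; auto. Qed.

Section CCfacts.
Context {X : esp}.

Lemma cc_le_refl c : cc_le X c c.
Proof. apply t_step. left. destruct c; simpl; apply (le_refl (esp_ax X)). Qed.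

Lemma cc_le_und c c' : cc_le X c c' -> leq X (und c) (und c').
Proof.
  induction 1 as [c c' H| c c' c'' _ IH1 _ IH2].
  - destruct H as [H|[-> _]].
    + destruct c, c'; simpl in *; tauto.
    + rewrite und_bar. apply (le_refl (esp_ax X)).
  - apply (le_trans (esp_ax X)) with (und c'); auto.
Qed.

Lemma dle_tag s a a' : leq X a a' -> cc_le X (tag s a) (tag s a').
Proof. intro H. apply t_step. left. destruct s; simpl; auto. Qed.

Lemma bar_le c : dpol X c = true -> cc_le X (bar c) c.
Proof. intro H. apply t_step. right. auto. Qed.

Lemma dle_tag_inv c s r : dle X c (tag s r) -> exists r', c = tag s r' /\ leq X r' r.
Proof.
  destruct c as [a|a], s; simpl; intro H; try tauto; exists a; auto.
Qed.

Lemma cc_closed (Y : ev X + ev X -> Prop) :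
  (forall c c', Y c' -> cc_step X c c' -> Y c) ->
  forall c c', Y c' -> cc_le X c c' -> Y c.
Proof.
  intros H c c' Hc' Hle. revert Hc'. induction Hle; eauto.
Qed.

Lemma cc_config_part (y : ev X + ev X -> Prop) s :
  config (CC X) y -> config X (fun a => y (tag s a)).
Proof.
  intros [[_ [_ [HL HR]]] Hd]. split.
  - assert (H : con X (fun a => exists c', y c' /\ cc_le X (tag s a) c')).
    { destruct s; auto. }
    apply (con_sub (esp_ax X) _ _ H). intros a Ha. exists (tag s a). split; auto.
    apply cc_le_refl.
  - intros a a' Ha Hle. apply (Hd (tag s a)); auto. apply dle_tag; auto.
Qed.

Lemma cc_config_intro (Y : ev X + ev X -> Prop) :
  Finite Y ->
  (forall c c', Y c' -> cc_step X c c' -> Y c) ->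
  con X (fun a => Y (inl a)) -> con X (fun a => Y (inr a)) ->
  config (CC X) Y.
Proof.
  intros Hfin Hst HL HR.
  assert (Hd : forall c, (exists c', Y c' /\ cc_le X c c') <-> Y c).
  { intro c. split.
    - intros [c' [Hc' Hle]]. eapply cc_closed; eauto.
    - intro Hc. exists c. split; auto. apply cc_le_refl. }
  split.
  - simpl. unfold cc_con, dcon. split; auto. split; [|split].
    + apply Finite_ext with Y; auto. intro c. symmetry. apply Hd.
    + apply con_ext with (1 := HL). intro a. symmetry. apply Hd.
    + apply con_ext with (1 := HR). intro a. symmetry. apply Hd.
  - intros e e' He Hle. eapply cc_closed; eauto.
Qed.

Lemma cc_config_fin (y : ev X + ev X -> Prop) : config (CC X) y -> Finite y.
Proof. intros [[H _] _]. exact H. Qed.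
End CCfacts.

Lemma CC_map_is_map (A B : esp) (f : ev A -> ev B) :
  is_map f -> is_map (A := CC A) (B := CC B) (CC_map f).
Proof.
  intros Hf. pose proof Hf as [Hf1 [Hf2 Hf3]].
  split; [|split].
  - intro c. simpl. apply dpol_CC; auto.
  - intros y Hy.
    assert (Hp : forall s, config B (image f (fun a => y (tag s a)))).
    { intro s. apply Hf2. apply cc_config_part; auto. }
    apply cc_config_intro.
    + apply Finite_image. exact (cc_config_fin Hy).
    + intros c c' [c0 [Hc0 <-]] Hst. destruct Hst as [Hdle|[-> Hpos]].
      * rewrite <- (tag_side_und c0) in Hdle. rewrite CC_tag in Hdle.
        destruct (dle_tag_inv _ _ _ Hdle) as [b' [-> Hb']].
        destruct (proj2 (Hp (side c0)) (f (und c0)) b') as [a' [Ha' <-]]; auto.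
        { exists (und c0). rewrite tag_side_und. auto. }
        exists (tag (side c0) a'). split; auto. apply CC_tag.
      * exists (bar c0). split.
        -- destruct Hy as [_ Hd]. apply (Hd c0); auto. apply bar_le.
           rewrite dpol_CC in Hpos; auto.
        -- apply CC_bar.
    + apply con_ext with (image f (fun a => y (tag false a))).
      * apply Hp.
      * intro b. unfold image. split.
        -- intros [a [Ha <-]]. exists (inl a). auto.
        -- intros [[a|a] [Ha Heq]]; inversion Heq; subst. exists a; auto.
    + apply con_ext with (image f (fun a => y (tag true a))).
      * apply Hp.
      * intro b. unfold image. split.
        -- intros [a [Ha <-]]. exists (inr a). auto.
        -- intros [[a|a] [Ha Heq]]; inversion Heq; subst. exists a; auto.
  - intros y Hy c c' Hc Hc' Heq.
    assert (Hs : side c = side c').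
    { rewrite <- (side_CC _ _ f c), <- (side_CC _ _ f c'), Heq. auto. }
    assert (Hu : f (und c) = f (und c')).
    { rewrite <- !und_CC, Heq. auto. }
    rewrite <- (tag_side_und c), <- (tag_side_und c'). rewrite Hs. f_equal.
    apply (Hf3 _ (cc_config_part (side c') Hy)); auto.
    + rewrite <- Hs, tag_side_und; auto.
    + rewrite tag_side_und; auto.
Qed.

Lemma sub_und_map (Q : esp) (X : esp) (r : ev Q -> ev X + ev X)
  (Hr : is_map (A := Q) (B := CC X) r)
  (S : ev Q -> Prop) (s : bool) (pl : ev Q -> bool)
  (HS : forall e, S e -> side (r e) = s)
  (HSd : forall e e3, S e -> leq Q e3 e -> side (r e3) = s -> S e3)
  (Hpl : forall e, S e -> pl e = pol X (und (r e))) :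
  is_map (A := Sub Q S pl) (B := X) (fun w => und (r (proj1_sig w))).
Proof.
  pose proof Hr as [Hr1 [Hr2 Hr3]].
  split; [|split].
  - intros [e He]. simpl. symmetry. apply Hpl; auto.
  - intros x Hx. pose proof (sub_config_lift Hx) as Hcon.
    pose proof (cc_config_part s (map_down_config Hr _ Hcon)) as Hpart.
    split.
    + apply (con_sub (esp_ax X) _ _ (proj1 Hpart)).
      intros a [[e He] [Hxe <-]]. simpl.
      exists e. split.
      * apply down_incl. exists He. auto.
      * rewrite <- (HS e He). symmetry; apply tag_side_und.
    + intros a a' [[e He] [Hxe <-]] Hle. simpl in Hle.
      assert (H1 : cc_le X (tag s a') (r e)).
      { rewrite <- (tag_side_und (r e)), (HS e He). apply dle_tag; auto. }
      destruct (map_down Hr e _ H1) as [e3 [Hle3 Hre3]].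
      assert (HS3 : S e3).
      { apply HSd with e; auto. rewrite Hre3. apply side_tag. }
      exists (exist _ e3 HS3). split.
      * destruct Hx as [_ Hd]. apply (Hd (exist _ e He)); auto.
      * simpl. rewrite Hre3. apply und_tag.
  - intros x Hx [e He] [e' He'] Hxe Hxe' Heq. simpl in Heq.
    apply sig_eq. simpl.
    apply (map_inj_con Hr (lift Q S x)); auto.
    + apply (sub_config_lift Hx).
    + exists He; auto.
    + exists He'; auto.
    + rewrite <- (tag_side_und (r e)), <- (tag_side_und (r e')), Heq, HS, HS; auto.
Qed.
Unset Implicit Arguments.

Lemma sig_eq' (T : Type) (S : T -> Prop) (w w' : sig S) : proj1_sig w = proj1_sig w' -> w = w'.
Proof.
  destruct w as [x H], w' as [x' H']. simpl. intros ->. f_equal. apply proof_irrelevance.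
Qed.

Lemma map_pol (X Y : pre_esp) (f : ev X -> ev Y) : is_map f -> forall a, pol Y (f a) = pol X a.
Proof. intros [H _]; exact H. Qed.

Lemma map_config (X Y : pre_esp) (f : ev X -> ev Y) : is_map f -> forall x, config X x -> config Y (image f x).
Proof. intros [_ [H _]]; exact H. Qed.

Lemma partner (Q' X Y Cc : esp) (fX : ev X -> ev Cc) (fY : ev Y -> ev Cc)
  (HfX : is_map fX)
  (rX : ev Q' -> ev X + ev X) (rY : ev Q' -> ev Y + ev Y)
  (HrX : is_map (A := Q') (B := CC X) rX) (HrY : is_map (A := Q') (B := CC Y) rY)
  (Hc : forall e, CC_map fX (rX e) = CC_map fY (rY e))
  (Z : ev Q' -> Prop) (HZ : config Q' Z) e e' :
  Z e -> Z e' -> rX e' = bar (rX e) -> rY e' = bar (rY e).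
Proof.
  assert (inner : forall pos neg, Z pos -> Z neg -> rX neg = bar (rX pos) ->
            pol Q' pos = true -> rY neg = bar (rY pos)).
  { intros pos neg Hpos Hneg Hb Hpp.
    assert (H1 : cc_le Y (bar (rY pos)) (rY pos)).
    { apply bar_le. pose proof (map_pol _ _ _ HrY pos) as H. simpl in H. rewrite H. auto. }
    destruct (map_down HrY pos _ H1) as [w [Hw1 Hw2]].
    assert (Zw : Z w). { destruct HZ as [_ Hd]. apply (Hd pos); auto. }
    assert (Heq : CC_map fX (rX w) = CC_map fX (rX neg)).
    { rewrite Hc, Hw2, CC_bar, <- Hc, <- CC_bar, <- Hb. auto. }
    pose proof (CC_map_is_map _ _ HfX) as HCC.
    assert (Hrw : rX w = rX neg).
    { destruct HCC as [_ [_ Hi]]. apply (Hi (image rX Z)).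
      - apply (map_config _ _ _ HrX _ HZ).
      - exists w; auto.
      - exists neg; auto.
      - exact Heq. }
    assert (w = neg).
    { apply (map_inj_con HrX Z); auto. apply HZ. }
    subst w. auto. }
  intros He He' Hb.
  destruct (pol Q' e) eqn:Hp.
  - apply inner; auto.
  - assert (Hp' : pol Q' e' = true).
    { pose proof (map_pol _ _ _ HrX e') as H1. pose proof (map_pol _ _ _ HrX e) as H2.
      simpl in H1, H2. rewrite <- H1, Hb, dpol_bar, H2, Hp. auto. }
    rewrite (inner e' e); auto.
    + symmetry; apply bar_bar.
    + rewrite Hb, bar_bar. auto.
Qed.

Section Main.
Variables P A B C : esp.
Variables (p1 : ev P -> ev A) (p2 : ev P -> ev B) (f : ev A -> ev C) (g : ev B -> ev C).
Hypothesis Hpb : is_pullback p1 p2 f g.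
Variable Q : esp.
Variables (q1 : ev Q -> ev A + ev A) (q2 : ev Q -> ev B + ev B).
Hypothesis Hq1 : is_map (A := Q) (B := CC A) q1.
Hypothesis Hq2 : is_map (A := Q) (B := CC B) q2.
Hypothesis Hcomm : forall x, CC_map f (q1 x) = CC_map g (q2 x).

Lemma Hf : is_map f. Proof. apply Hpb. Qed.
Lemma Hg : is_map g. Proof. apply Hpb. Qed.

Lemma pb_exists (W : esp) (a : ev W -> ev A) (b : ev W -> ev B) :
  is_map a -> is_map b -> (forall w, f (a w) = g (b w)) ->
  exists h : ev W -> ev P, is_map h /\ (forall w, p1 (h w) = a w) /\ (forall w, p2 (h w) = b w).
Proof.
  intros Ha Hb Hab. destruct Hpb as [_ [_ [_ [_ [_ Hu]]]]].
  destruct (Hu W a b Ha Hb Hab) as [h [H1 [H2 [H3 _]]]]. eauto.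
Qed.

Lemma pb_unique (W : esp) (a : ev W -> ev A) (b : ev W -> ev B) :
  is_map a -> is_map b -> (forall w, f (a w) = g (b w)) ->
  forall h1 h2 : ev W -> ev P, is_map h1 -> is_map h2 ->
  (forall w, p1 (h1 w) = a w) -> (forall w, p2 (h1 w) = b w) ->
  (forall w, p1 (h2 w) = a w) -> (forall w, p2 (h2 w) = b w) ->
  forall w, h1 w = h2 w.
Proof.
  intros Ha Hb Hab h1 h2 Hh1 Hh2 H11 H12 H21 H22 w.
  destruct Hpb as [_ [_ [_ [_ [_ Hu]]]]].
  destruct (Hu W a b Ha Hb Hab) as [h [_ [_ [_ Hun]]]].
  rewrite (Hun h1), (Hun h2); auto.
Qed.

Lemma side_q12 e : side (q2 e) = side (q1 e).
Proof. rewrite <- (side_CC _ _ g (q2 e)), <- Hcomm, side_CC. auto. Qed.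

Lemma und_q12 e : f (und (q1 e)) = g (und (q2 e)).
Proof. rewrite <- !und_CC, Hcomm. auto. Qed.

Lemma pol_q12 e : pol A (und (q1 e)) = pol B (und (q2 e)).
Proof.
  rewrite <- (map_pol _ _ _ Hf), <- (map_pol _ _ _ Hg). f_equal. apply und_q12.
Qed.

Definition Sstep (e e' : ev Q) : Prop :=
  leq Q e e' /\ (cc_le A (q1 e) (q1 e') \/ cc_le B (q2 e) (q2 e')).
Definition qle : ev Q -> ev Q -> Prop := clos_trans _ Sstep.

Lemma qle_leq e e' : qle e e' -> leq Q e e'.
Proof.
  induction 1 as [x y [H _]|x y z _ IH1 _ IH2]; auto.
  apply (le_trans (esp_ax Q)) with y; auto.
Qed.

Lemma qle_refl e : qle e e.
Proof. apply t_step. split. apply (le_refl (esp_ax Q)). left. apply cc_le_refl. Qed.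

Lemma qle_trans e e' e'' : qle e e' -> qle e' e'' -> qle e e''.
Proof. intros; eapply t_trans; eauto. Qed.

Definition Qo_pre : pre_esp := @PreEsp (ev Q) (pol Q) qle (con Q).

Lemma Qo_axioms : esp_axioms Qo_pre.
Proof.
  pose proof (esp_ax Q) as AX. constructor; simpl.
  - apply qle_refl.
  - intros e e' H1 H2. apply (le_antisym AX); apply qle_leq; auto.
  - apply qle_trans.
  - intro e. apply Finite_sub with (fun e' => leq Q e' e).
    + apply (down_fin AX).
    + intros x; apply qle_leq.
  - apply (con_fin AX).
  - apply (con_empty AX).
  - apply (con_single AX).
  - apply (con_sub AX).
  - intros X e e' HX He Hle. apply (con_cause AX) with e; auto. apply qle_leq; auto.
Qed.

Definition Qo : esp := Esp Qo_axioms.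

Lemma config_Qo (z : ev Q -> Prop) : config Q z -> config Qo z.
Proof.
  intros [H1 H2]. split; auto. intros e e' He Hle. apply (H2 e); auto. apply qle_leq; auto.
Qed.

Lemma qo_map (X : esp) (rX : ev Q -> ev X + ev X)
  (HrX : is_map (A := Q) (B := CC X) rX)
  (Hstep : forall e3 e, leq Q e3 e -> cc_le X (rX e3) (rX e) -> qle e3 e) :
  is_map (A := Qo) (B := CC X) rX.
Proof.
  split; [|split].
  - apply (map_pol _ _ _ HrX).
  - intros x [Hx1 Hx2].
    pose proof (map_down_config HrX _ Hx1) as HD.
    apply cc_config_intro.
    + apply Finite_image. apply (con_fin (esp_ax Q) _ Hx1).
    + intros c c' [e [He <-]] Hst.
      assert (Hle : cc_le X c (rX e)) by (apply t_step; auto).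
      destruct (map_down HrX e _ Hle) as [e3 [Hle3 <-]].
      exists e3. split; auto. apply (Hx2 e); auto. simpl. apply Hstep; auto.
    + apply (con_sub (esp_ax X) _ _ (proj1 (cc_config_part false HD))).
      intros a [e [He Heq]]. exists e. split; auto. apply down_incl; auto.
    + apply (con_sub (esp_ax X) _ _ (proj1 (cc_config_part true HD))).
      intros a [e [He Heq]]. exists e. split; auto. apply down_incl; auto.
  - intros x [Hx1 _] a a' Ha Ha' Heq. apply (map_inj_con HrX x); auto.
Qed.

Lemma Hq1o : is_map (A := Qo) (B := CC A) q1.
Proof.
  apply qo_map; auto. intros e3 e H1 H2. apply t_step. split; auto.
Qed.

Lemma Hq2o : is_map (A := Qo) (B := CC B) q2.
Proof.
  apply qo_map; auto. intros e3 e H1 H2. apply t_step. split; auto.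
Qed.

Lemma Hcomm' e : CC_map g (q2 e) = CC_map f (q1 e).
Proof. auto. Qed.

Section Overlap.
Variable t : ev Q.
Hypothesis Ht : dpol A (q1 t) = true.

Definition Zt : ev Q -> Prop := fun e => qle e t.

Lemma Zt_config : config Qo Zt.
Proof. exact (single_config (X := Qo) t). Qed.

Lemma Zt_con : con Q Zt.
Proof. exact (proj1 Zt_config). Qed.

Lemma inj1 e e' : Zt e -> Zt e' -> q1 e = q1 e' -> e = e'.
Proof. intros; apply (map_inj_con Hq1o Zt); auto. exact Zt_con. Qed.

Lemma inj2 e e' : Zt e -> Zt e' -> q2 e = q2 e' -> e = e'.
Proof. intros; apply (map_inj_con Hq2o Zt); auto. exact Zt_con. Qed.

Lemma partnerAB e e' : Zt e -> Zt e' -> q1 e' = bar (q1 e) -> q2 e' = bar (q2 e).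
Proof.
  exact (@partner Qo A B C f g Hf q1 q2 Hq1o Hq2o Hcomm Zt Zt_config e e').
Qed.

Lemma partnerBA e e' : Zt e -> Zt e' -> q2 e' = bar (q2 e) -> q1 e' = bar (q1 e).
Proof.
  exact (@partner Qo B A C g f Hg q2 q1 Hq2o Hq1o Hcomm' Zt Zt_config e e').
Qed.

Definition rep (s : bool) (x x' : ev Q) : Prop := qle x' t /\ q1 x' = tag s (und (q1 x)).

Lemma rep_q2 s x x' : qle x t -> rep s x x' -> q2 x' = tag s (und (q2 x)).
Proof.
  intros Hx [Hx' Hq].
  destruct (bool_dec (side (q1 x)) s) as [Hs|Hs].
  - rewrite <- Hs, tag_side_und in Hq.
    assert (x' = x) by (apply inj1; auto). subst x'.
    rewrite <- Hs, <- side_q12, tag_side_und. auto.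
  - rewrite tag_neq in Hq; auto.
    rewrite (partnerAB x x'); auto. rewrite tag_neq; auto. rewrite side_q12; auto.
Qed.

Lemma overlap_gen : forall x y, qle x y -> qle y t ->
  (forall s, exists y', rep s y y') -> forall s, exists x', rep s x x'.
Proof.
  intros x y H. induction H as [x y [Hle Hst]|x z y Hxz IH1 Hzy IH2]; intros Hy Py s.
  - assert (Hx : qle x t) by (apply qle_trans with y; auto; apply t_step; split; auto).
    destruct (bool_dec (side (q1 x)) s) as [Hs|Hs].
    { exists x. split; auto. rewrite <- Hs, tag_side_und. auto. }
    destruct (Py s) as [y' [Hy' Hqy']].
    destruct Hst as [Hst|Hst].
    + assert (H1 : cc_le A (tag s (und (q1 x))) (q1 y')).
      { rewrite Hqy'. apply dle_tag. apply cc_le_und; auto. }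
      destruct (map_down Hq1o y' _ H1) as [w [Hw Hqw]].
      exists w. split; auto. apply qle_trans with y'; auto.
    + assert (Hq2y' : q2 y' = tag s (und (q2 y))) by (apply (rep_q2 s y y' Hy); split; auto).
      assert (H1 : cc_le B (tag s (und (q2 x))) (q2 y')).
      { rewrite Hq2y'. apply dle_tag. apply cc_le_und; auto. }
      destruct (map_down Hq2o y' _ H1) as [w [Hw Hqw]].
      assert (Zw : qle w t) by (apply qle_trans with y'; auto).
      exists w. split; auto.
      rewrite tag_neq; auto. apply (partnerBA x w Hx Zw).
      rewrite Hqw. apply tag_neq. rewrite side_q12; auto.
  - assert (Hz : qle z t) by (apply qle_trans with y; auto).
    apply IH1; auto.
Qed.

Lemma overlap x : qle x t -> forall s, exists x', rep s x x'.
Proof.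
  intro Hx. apply overlap_gen with t; auto. apply qle_refl.
  intro s. destruct (bool_dec (side (q1 t)) s) as [Hs|Hs].
  - exists t. split. apply qle_refl. rewrite <- Hs, tag_side_und. auto.
  - assert (H1 : cc_le A (bar (q1 t)) (q1 t)) by (apply bar_le; auto).
    destruct (map_down Hq1o t _ H1) as [w [Hw Hqw]].
    exists w. split; auto. rewrite Hqw, tag_neq; auto.
Qed.

Lemma rep_mono : forall x y, qle x y -> qle y t ->
  forall s x' y', rep s x x' -> rep s y y' -> qle x' y'.
Proof.
  intros x y H. induction H as [x y [Hle Hst]|x z y Hxz IH1 Hzy IH2];
    intros Hy s x' y' Hx' Hy'.
  - assert (Hx : qle x t) by (apply qle_trans with y; auto; apply t_step; split; auto).
    destruct Hst as [Hst|Hst].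
    + assert (H1 : cc_le A (q1 x') (q1 y')).
      { rewrite (proj2 Hx'), (proj2 Hy'). apply dle_tag. apply cc_le_und; auto. }
      destruct (map_down Hq1o y' _ H1) as [w [Hw Hqw]].
      assert (w = x').
      { apply inj1; auto. apply qle_trans with y'; auto. apply Hy'. apply Hx'. }
      subst w. exact Hw.
    + assert (H1 : cc_le B (q2 x') (q2 y')).
      { rewrite (rep_q2 s x x' Hx Hx'), (rep_q2 s y y' Hy Hy'). apply dle_tag. apply cc_le_und; auto. }
      destruct (map_down Hq2o y' _ H1) as [w [Hw Hqw]].
      assert (w = x').
      { apply inj2; auto. apply qle_trans with y'; auto. apply Hy'. apply Hx'. }
      subst w. exact Hw.
  - assert (Hz : qle z t) by (apply qle_trans with y; auto).
    destruct (overlap z Hz s) as [z' Hz'].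
    apply qle_trans with z'.
    + apply (IH1 Hz s); auto.
    + apply (IH2 Hy s); auto.
Qed.
End Overlap.

Lemma rep_side t s x x' : rep t s x x' -> side (q1 x') = s.
Proof. intros [_ H]. rewrite H. apply side_tag. Qed.

Definition plA (e : ev Q) : bool := pol A (und (q1 e)).
Definition To (s : bool) : esp := Sub Qo (fun e => side (q1 e) = s) plA.
Definition TQ (s : bool) : esp := Sub Q (fun e => side (q1 e) = s) plA.

Lemma To_u1 s : is_map (A := To s) (B := A) (fun w => und (q1 (proj1_sig w))).
Proof.
  apply (sub_und_map Qo A Hq1o (fun e => side (q1 e) = s) plA (s:=s)); auto.
Qed.

Lemma To_u2 s : is_map (A := To s) (B := B) (fun w => und (q2 (proj1_sig w))).
Proof.
  apply (sub_und_map Qo B Hq2o (fun e => side (q1 e) = s) plA (s:=s)).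
  - intros e H. rewrite side_q12. auto.
  - intros e e3 _ _ H. rewrite <- side_q12. auto.
  - intros e _. apply pol_q12.
Qed.

Lemma TQ_u1 s : is_map (A := TQ s) (B := A) (fun w => und (q1 (proj1_sig w))).
Proof.
  apply (sub_und_map Q A Hq1 (fun e => side (q1 e) = s) plA (s:=s)); auto.
Qed.

Lemma TQ_u2 s : is_map (A := TQ s) (B := B) (fun w => und (q2 (proj1_sig w))).
Proof.
  apply (sub_und_map Q B Hq2 (fun e => side (q1 e) = s) plA (s:=s)).
  - intros e H. rewrite side_q12. auto.
  - intros e e3 _ _ H. rewrite <- side_q12. auto.
  - intros e _. apply pol_q12.
Qed.

Section Coherence.
Variable k : forall s, ev (To s) -> ev P.
Hypothesis Hk : forall s, is_map (k s).
Hypothesis Hk1 : forall s w, p1 (k s w) = und (q1 (proj1_sig w)).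
Hypothesis Hk2 : forall s w, p2 (k s w) = und (q2 (proj1_sig w)).

Section CohT.
Variable t : ev Q.
Hypothesis Ht : dpol A (q1 t) = true.
Variable s : bool.

Definition SW (e : ev Q) : Prop := qle e t /\ side (q1 e) = s.
Definition W : esp := Sub Qo SW plA.

Definition repc (e : ev Q) (H : qle e t) : {x' | rep t (negb s) e x'} :=
  constructive_indefinite_description _ (overlap t Ht e H (negb s)).

Definition phi (w : ev W) : ev (To (negb s)) :=
  exist _ (proj1_sig (repc (proj1_sig w) (proj1 (proj2_sig w))))
          (rep_side t (negb s) _ _ (proj2_sig (repc (proj1_sig w) (proj1 (proj2_sig w))))).

Definition psi (w : ev W) : ev (To s) := exist _ (proj1_sig w) (proj2 (proj2_sig w)).

Lemma phi_spec w : rep t (negb s) (proj1_sig w) (proj1_sig (phi w)).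
Proof. unfold phi. simpl. apply proj2_sig. Qed.

Lemma W_u1 : is_map (A := W) (B := A) (fun w => und (q1 (proj1_sig w))).
Proof.
  apply (sub_und_map Qo A Hq1o SW plA (s:=s)).
  - intros e H. apply H.
  - intros e e3 [H1 H2] H3 H4. split; auto. apply qle_trans with e; auto.
  - auto.
Qed.

Lemma W_u2 : is_map (A := W) (B := B) (fun w => und (q2 (proj1_sig w))).
Proof.
  apply (sub_und_map Qo B Hq2o SW plA (s:=s)).
  - intros e H. rewrite side_q12. apply H.
  - intros e e3 [H1 H2] H3 H4. split.
    + apply qle_trans with e; auto.
    + rewrite <- side_q12; auto.
  - intros e _. apply pol_q12.
Qed.

Lemma psi_map : is_map (A := W) (B := To s) psi.
Proof.
  split; [|split].
  - intro w. reflexivity.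
  - intros x [Hx1 Hx2]. split.
    + simpl. apply (con_sub (esp_ax Q) _ _ Hx1).
      intros e [He [w [Hw Heq]]].
      assert (Hv : proj1_sig w = e) by (apply (f_equal (@proj1_sig _ _)) in Heq; exact Heq).
      subst e. exists (proj2_sig w). destruct w. exact Hw.
    + intros e e' [w [Hw <-]] Hle. simpl in Hle.
      destruct e' as [e' He']. simpl in Hle.
      assert (Hs : SW e').
      { split; auto. apply qle_trans with (proj1_sig w); auto. apply (proj2_sig w). }
      exists (exist _ e' Hs). split.
      * apply (Hx2 w); auto.
      * apply sig_eq'. reflexivity.
  - intros x Hx w w' Hw Hw' Heq. apply sig_eq'.
    apply (f_equal (@proj1_sig _ _)) in Heq. exact Heq.
Qed.

Lemma phi_map : is_map (A := W) (B := To (negb s)) phi.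
Proof.
  split; [|split].
  - intro w. change (plA (proj1_sig (phi w)) = plA (proj1_sig w)). unfold plA.
    rewrite (proj2 (phi_spec w)), und_tag. reflexivity.
  - intros x [Hx1 Hx2]. split.
    + simpl. apply (con_sub (esp_ax Q) _ _ (Zt_con t)).
      intros e [He [w [Hw Heq]]].
      apply (f_equal (@proj1_sig _ _)) in Heq. simpl in Heq. rewrite <- Heq.
      apply (phi_spec w).
    + intros e4 w4 [w [Hw <-]] Hle. simpl in Hle.
      destruct w4 as [e4' He4]. simpl in Hle.
      pose proof (phi_spec w) as [Hpt Hpq].
      assert (Z4 : qle e4' t) by (apply qle_trans with (proj1_sig (phi w)); auto).
      destruct (overlap t Ht e4' Z4 s) as [c4 Hc4].
      assert (Hwt : qle (proj1_sig w) t) by apply (proj2_sig w).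
      assert (Hws : side (q1 (proj1_sig w)) = s) by apply (proj2_sig w).
      assert (Hrw : rep t s (proj1_sig (phi w)) (proj1_sig w)).
      { split; auto. rewrite Hpq, und_tag, <- Hws, tag_side_und. auto. }
      assert (Hc4w : qle c4 (proj1_sig w)).
      { apply (rep_mono t Ht e4' (proj1_sig (phi w)) Hle Hpt s c4 (proj1_sig w)); auto. }
      assert (Hsw : SW c4).
      { split. apply Hc4. apply (rep_side t s e4' c4 Hc4). }
      exists (exist _ c4 Hsw). split.
      * apply (Hx2 w); auto.
      * apply sig_eq'. simpl.
        pose proof (phi_spec (exist _ c4 Hsw)) as [Hp1' Hp2']. simpl in Hp1', Hp2'.
        apply (inj1 t); auto.
        rewrite Hp2', (proj2 Hc4), und_tag.
        simpl in He4. rewrite <- He4. apply tag_side_und.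
  - intros x Hx w w' Hw Hw' Heq.
    apply (f_equal (@proj1_sig _ _)) in Heq.
    pose proof (phi_spec w) as [Ha1 Ha2]. pose proof (phi_spec w') as [Hb1 Hb2].
    rewrite Heq, Hb2 in Ha2.
    destruct (tag_inj _ _ _ _ Ha2) as [_ Hu].
    apply sig_eq'. apply (inj1 t).
    + apply (proj2_sig w).
    + apply (proj2_sig w').
    + rewrite <- (tag_side_und (q1 (proj1_sig w))), <- (tag_side_und (q1 (proj1_sig w'))).
      f_equal; [|symmetry; exact Hu].
      rewrite (proj2 (proj2_sig w)), (proj2 (proj2_sig w')). auto.
Qed.

Lemma coherence_main (H1 : side (q1 t) = s) n (Hn : qle n t) (Hq : q1 n = bar (q1 t))
  (H2 : side (q1 n) = negb s) :
  k s (exist _ t H1) = k (negb s) (exist _ n H2).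
Proof.
  assert (U := pb_unique W _ _ W_u1 W_u2 (fun w => und_q12 (proj1_sig w))
             (fun w => k s (psi w)) (fun w => k (negb s) (phi w))
             (map_comp _ _ _ psi_map (Hk s)) (map_comp _ _ _ phi_map (Hk (negb s)))).
  assert (Ht' : SW t) by (split; auto; apply qle_refl).
  specialize (U (fun w => Hk1 s (psi w)) (fun w => Hk2 s (psi w))).
  assert (V : k s (psi (exist _ t Ht')) = k (negb s) (phi (exist _ t Ht'))).
  { apply U.
    - intro w. rewrite Hk1. cbv beta. rewrite (proj2 (phi_spec w)), und_tag. auto.
    - intro w. rewrite Hk2. cbv beta.
      rewrite (rep_q2 t (negb s) _ _ (proj1 (proj2_sig w)) (phi_spec w)), und_tag. auto. }
  transitivity (k s (psi (exist _ t Ht'))).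
  { f_equal. apply sig_eq'. reflexivity. }
  rewrite V. f_equal.
  apply sig_eq'. simpl.
  pose proof (phi_spec (exist _ t Ht')) as [Hp1' Hp2']. simpl in Hp1', Hp2'.
  apply (inj1 t); auto.
  rewrite Hp2', Hq. apply tag_neq. rewrite H1. intro E. symmetry in E. exact (Bool.no_fixpoint_negb s E).
Qed.
End CohT.
End Coherence.

Section Assembly.
Variable k : forall s, ev (To s) -> ev P.
Hypothesis Hk : forall s, is_map (k s).
Hypothesis Hk1 : forall s w, p1 (k s w) = und (q1 (proj1_sig w)).
Hypothesis Hk2 : forall s w, p2 (k s w) = und (q2 (proj1_sig w)).

Definition h (e : ev Q) : ev P + ev P :=
  tag (side (q1 e)) (k (side (q1 e)) (exist (fun x => side (q1 x) = side (q1 e)) e eq_refl)).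

Lemma h_eq s e (H : side (q1 e) = s) : h e = tag s (k s (exist _ e H)).
Proof. destruct H. reflexivity. Qed.

Lemma h_p1 e : CC_map p1 (h e) = q1 e.
Proof. unfold h. rewrite CC_tag, Hk1. simpl. apply tag_side_und. Qed.

Lemma h_p2 e : CC_map p2 (h e) = q2 e.
Proof. unfold h. rewrite CC_tag, Hk2. simpl. rewrite <- side_q12. apply tag_side_und. Qed.

Lemma h_side e : side (h e) = side (q1 e).
Proof. rewrite <- (side_CC _ _ p1 (h e)), h_p1. auto. Qed.

Lemma h_pol e : dpol P (h e) = pol Q e.
Proof.
  unfold h. rewrite dpol_tag. rewrite (map_pol _ _ _ (Hk _) _).
  change (pol (To (side (q1 e))) (exist (fun x => side (q1 x) = side (q1 e)) e eq_refl))
    with (pol A (und (q1 e))).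
  rewrite <- (map_pol _ _ _ Hq1 e). simpl. destruct (q1 e); reflexivity.
Qed.

Lemma zs_config (z : ev Q -> Prop) s : config Q z ->
  config (To s) (fun w => z (proj1_sig w)).
Proof.
  intros [Hz1 Hz2]. split.
  - simpl. apply (con_sub (esp_ax Q) _ _ Hz1). intros e [He H]. exact H.
  - intros w w' Hw Hle. simpl in Hle. apply (Hz2 (proj1_sig w)); auto. apply qle_leq; auto.
Qed.

Lemma h_map : is_map (A := Q) (B := CC P) h.
Proof.
  split; [|split].
  - intro e. simpl. apply h_pol.
  - intros z Hz.
    assert (Hkz : forall s, config P (image (k s) (fun w => z (proj1_sig w)))).
    { intro s. apply (map_config _ _ _ (Hk s)). apply zs_config; auto. }
    assert (Hpart : forall s0, con P (fun r => image h z (tag s0 r))).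
    { intro s0. apply (con_sub (esp_ax P) _ _ (proj1 (Hkz s0))).
      intros r [e [He Heq]].
      assert (Hs : side (q1 e) = s0).
      { rewrite <- h_side, Heq. apply side_tag. }
      rewrite (h_eq s0 e Hs) in Heq. apply tag_inj in Heq. destruct Heq as [_ Heq].
      exists (exist _ e Hs). split; auto. }
    apply cc_config_intro.
    + apply Finite_image. apply (con_fin (esp_ax Q) _ (proj1 Hz)).
    + intros c c' [e [He <-]] Hst. destruct Hst as [Hdle|[-> Hpos]].
      * unfold h in Hdle. destruct (dle_tag_inv _ _ _ Hdle) as [r' [-> Hr']].
        set (s := side (q1 e)) in *.
        destruct (proj2 (Hkz s) _ r' (ex_intro _ (exist _ e eq_refl) (conj He eq_refl)) Hr')
          as [w' [Hw' <-]].
        exists (proj1_sig w'). split; auto.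
        rewrite (h_eq s _ (proj2_sig w')). destruct w'. reflexivity.
      * rewrite h_pol in Hpos.
        assert (Hp : dpol A (q1 e) = true).
        { rewrite <- Hpos. apply (map_pol _ _ _ Hq1 e). }
        assert (H1 : cc_le A (bar (q1 e)) (q1 e)) by (apply bar_le; auto).
        destruct (map_down Hq1 e _ H1) as [n [Hne Hqn]].
        assert (Hn : qle n e).
        { apply t_step. split; auto. left. rewrite Hqn. auto. }
        exists n. split.
        { apply (proj2 Hz e); auto. }
        assert (H2 : side (q1 n) = negb (side (q1 e))) by (rewrite Hqn; apply side_bar).
        rewrite (h_eq _ n H2). unfold h. rewrite bar_tag. f_equal. symmetry.
        apply (coherence_main k Hk Hk1 Hk2 e Hp (side (q1 e)) eq_refl n Hn Hqn H2).
    + apply (Hpart false).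
    + apply (Hpart true).
  - intros z Hz e e' He He' Heq.
    apply (map_inj_con Hq1 z); auto. apply Hz.
    rewrite <- h_p1, <- h_p1, Heq. auto.
Qed.

Lemma h_unique (h' : ev Q -> ev P + ev P) :
  is_map (A := Q) (B := CC P) h' ->
  (forall x, CC_map p1 (h' x) = q1 x) -> (forall x, CC_map p2 (h' x) = q2 x) ->
  forall x, h' x = h x.
Proof.
  intros Hh' H1' H2' x.
  set (s := side (q1 x)).
  assert (Hside : forall e, side (h' e) = side (q1 e)).
  { intro e. rewrite <- (side_CC _ _ p1 (h' e)), H1'. auto. }
  assert (Hms : is_map (A := TQ s) (B := P) (fun w => und (h' (proj1_sig w)))).
  { apply (sub_und_map Q P Hh' (fun e => side (q1 e) = s) plA (s := s)).
    - intros e He. rewrite Hside. auto.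
    - intros e e3 _ _ H. rewrite <- Hside. auto.
    - intros e _. unfold plA.
      rewrite <- (map_pol _ _ _ (proj1 Hpb)), <- und_CC, H1'. auto. }
  assert (Hio : is_map (A := TQ s) (B := To s) (fun w => w)).
  { split; [|split].
    - intro w. reflexivity.
    - intros y [Hy1 Hy2]. apply (config_ext (X := To s) (Y := y)).
      + split.
        * exact Hy1.
        * intros w w' Hw Hle. apply (Hy2 w); auto. simpl. apply qle_leq. exact Hle.
      + intro w. unfold image. split.
        * intro Hw. exists w. auto.
        * intros [w' [Hw' <-]]. auto.
    - intros y _ w w' _ _ Heq. exact Heq. }
  assert (U := pb_unique (TQ s) _ _ (TQ_u1 s) (TQ_u2 s) (fun w => und_q12 (proj1_sig w))
              (fun w => und (h' (proj1_sig w))) (fun w => k s w)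
              Hms (map_comp _ _ _ Hio (Hk s))).
  assert (V : und (h' x) = k s (exist _ x eq_refl)).
  { assert (E1 : forall w : ev (TQ s), p1 (und (h' (proj1_sig w))) = und (q1 (proj1_sig w))).
    { intro w. rewrite <- und_CC, H1'. reflexivity. }
    assert (E2 : forall w : ev (TQ s), p2 (und (h' (proj1_sig w))) = und (q2 (proj1_sig w))).
    { intro w. rewrite <- und_CC, H2'. reflexivity. }
    exact (U E1 E2 (fun w => Hk1 s w) (fun w => Hk2 s w)
            (exist (fun e => side (q1 e) = s) x eq_refl)). }
  rewrite <- (tag_side_und (h' x)), Hside, V. reflexivity.
Qed.
End Assembly.

Lemma exists_k : exists k : forall s, ev (To s) -> ev P,
  (forall s, is_map (k s)) /\ (forall s w, p1 (k s w) = und (q1 (proj1_sig w))) /\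
  (forall s w, p2 (k s w) = und (q2 (proj1_sig w))).
Proof.
  destruct (pb_exists (To true) _ _ (To_u1 true) (To_u2 true) (fun w => und_q12 (proj1_sig w)))
    as [kT [HT1 [HT2 HT3]]].
  destruct (pb_exists (To false) _ _ (To_u1 false) (To_u2 false) (fun w => und_q12 (proj1_sig w)))
    as [kF [HF1 [HF2 HF3]]].
  exists (fun s : bool => if s as b return ev (To b) -> ev P then kT else kF).
  split; [|split]; intros []; auto.
Qed.

Lemma main_univ : exists hh : ev Q -> ev P + ev P,
  is_map (A := Q) (B := CC P) hh /\ (forall x, CC_map p1 (hh x) = q1 x) /\
  (forall x, CC_map p2 (hh x) = q2 x) /\
  forall h', is_map (A := Q) (B := CC P) h' -> (forall x, CC_map p1 (h' x) = q1 x) ->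
    (forall x, CC_map p2 (h' x) = q2 x) -> forall x, h' x = hh x.
Proof.
  destruct exists_k as [k [Hk [Hk1 Hk2]]].
  exists (h k). split; [|split; [|split]].
  - apply h_map; auto.
  - apply h_p1; auto.
  - apply h_p2; auto.
  - intros h' H1 H2 H3. apply h_unique; auto.
Qed.
End Main.

Theorem mainTheorem7 (P A B C : esp)
  (p1 : ev P -> ev A) (p2 : ev P -> ev B)
  (f : ev A -> ev C) (g : ev B -> ev C) :
  @is_pullback P A B C p1 p2 f g ->
  @is_pullback (CC P) (CC A) (CC B) (CC C)
    (@CC_map P A p1) (@CC_map P B p2) (@CC_map A C f) (@CC_map B C g).
Proof.
  intro Hpb. pose proof Hpb as [Hp1 [Hp2 [Hf' [Hg' [Hc _]]]]].
  split; [apply CC_map_is_map; auto|].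
  split; [apply CC_map_is_map; auto|].
  split; [apply CC_map_is_map; auto|].
  split; [apply CC_map_is_map; auto|].
  split.
  - intros [a|a]; simpl; rewrite Hc; auto.
  - intros Q q1 q2 Hq1 Hq2 Hcomm.
    exact (main_univ P A B C p1 p2 f g Hpb Q q1 q2 Hq1 Hq2 Hcomm).
Qed.
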